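(* Let $(G,\oplus)$ be a gyrogroup and let $S\subseteq G\setminus\{e\}$ be symmetric. (1) If $\mathrm{gyr}[g,s](S)=S$ for all $s\in S$ and $g\in G$, then the R-Cayley graph $\mathrm{RCay}(G,S)$ is undirected. (2) Conversely, if $\mathrm{RCay}(G,S)$ is undirected, then $\mathrm{gyr}[g,s](s)\in S$ for all $g\in G$ and $s\in S$.
   Context: A gyrogroup is a nonempty set $G$ with a binary operation $\oplus$ such that: (i) there is a unique $e\in G$ with $e\oplus x=x=x\oplus e$ for all $x$; (ii) each $x\in G$ has a unique inverse $\ominus x$ with $\ominus x\oplus x=e=x\oplus(\ominus x)$; (iii) for all $x,y\in G$ there is an automorphism $\mathrm{gyr}[x,y]$ of $(G,\oplus)$ with $x\oplus(y\oplus z)=(x\oplus y)\oplus \mathrm{gyr}[x,y](z)$ for all $z\in G$; (iv) $\mathrm{gyr}[x\oplus y,y]=\mathrm{gyr}[x,y]$ for all $x,y$. A subset $S\subseteq G$ is symmetric if $\ominus s\in S$ for every $s\in S$. For $S\subseteq G$ with $e\notin S$, the R-Cayley graph $\mathrm{RCay}(G,S)$ is the directed graph with vertex set $G$ and a directed edge $u\to v$ iff $v=u\oplus s$ for some $s\in S$. The graph is undirected if whenever $u\to v$ is an edge, $v\to u$ is also an edge. *)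

(* Defs.v *)
Record gyrogroup := Gyrogroup {
  carrier :> Type;
  gop : carrier -> carrier -> carrier;
  gid : carrier;
  ginv : carrier -> carrier;
  gyr : carrier -> carrier -> carrier -> carrier;
  gid_l : forall x, gop gid x = x;
  gid_r : forall x, gop x gid = x;
  gid_unique : forall e', (forall x, gop e' x = x /\ gop x e' = x) -> e' = gid;
  ginv_l : forall x, gop (ginv x) x = gid;
  ginv_r : forall x, gop x (ginv x) = gid;
  ginv_unique : forall x y, gop y x = gid -> gop x y = gid -> y = ginv x;
  gyr_morph : forall x y a b, gyr x y (gop a b) = gop (gyr x y a) (gyr x y b);
  gyr_inj : forall x y a b, gyr x y a = gyr x y b -> a = b;
  gyr_surj : forall x y b, exists a, gyr x y a = b;
  gyr_assoc : forall x y z, gop x (gop y z) = gop (gop x y) (gyr x y z);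
  gyr_loop : forall x y, gyr (gop x y) y = gyr x y
}.

Arguments gop {G} : rename.
Arguments gid {G} : rename.
Arguments ginv {G} : rename.
Arguments gyr {G} : rename.

Definition symmetric {G : gyrogroup} (S : G -> Prop) : Prop :=
  forall s, S s -> S (ginv s).

Definition image {G : gyrogroup} (f : G -> G) (S : G -> Prop) : G -> Prop :=
  fun x => exists y, S y /\ f y = x.

Definition rcay_edge {G : gyrogroup} (S : G -> Prop) (u v : G) : Prop :=
  exists s, S s /\ v = gop u s.

Definition rcay_undirected {G : gyrogroup} (S : G -> Prop) : Prop :=
  forall u v, rcay_edge S u v -> rcay_edge S v u.

(* Main.v *)
Require Import Defs.

Lemma lcancel (G : gyrogroup) (a t t' : G) : gop a t = gop a t' -> t = t'.
Proof.
  intro H.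
  assert (E : gop (ginv a) (gop a t) = gop (ginv a) (gop a t')) by (rewrite H; reflexivity).
  rewrite !gyr_assoc, ginv_l, !gid_l in E.
  exact (gyr_inj _ _ _ _ _ E).
Qed.

Lemma gyr_id (G : gyrogroup) (x y : G) : gyr x y gid = gid.
Proof.
  apply gid_unique. intro b.
  destruct (gyr_surj _ x y b) as [a Ha]. subst b.
  rewrite <- !gyr_morph, gid_l, gid_r. split; reflexivity.
Qed.

Lemma gyr_inv (G : gyrogroup) (x y a : G) : gyr x y (ginv a) = ginv (gyr x y a).
Proof.
  apply ginv_unique; rewrite <- gyr_morph, ?ginv_l, ?ginv_r; apply gyr_id.
Qed.

Lemma inv_inv (G : gyrogroup) (x : G) : ginv (ginv x) = x.
Proof. symmetry. apply ginv_unique; [apply ginv_r | apply ginv_l]. Qed.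

Lemma key (G : gyrogroup) (u s : G) : gop (gop u s) (gyr u s (ginv s)) = u.
Proof. rewrite <- gyr_assoc, ginv_r, gid_r. reflexivity. Qed.

Theorem mainTheorem3 (G : gyrogroup) (S : G -> Prop)
  (HSe : ~ S gid) (Hsym : symmetric S) :
  ((forall (g s : G), S s -> forall x, image (gyr g s) S x <-> S x) ->
     rcay_undirected S)
  /\
  (rcay_undirected S -> forall (g s : G), S s -> S (gyr g s s)).
Proof.
  split.
  - intros H u v [s [Hs ->]].
    exists (gyr u s (ginv s)). split.
    + apply (H u s Hs). exists (ginv s). split; [apply Hsym; exact Hs | reflexivity].
    + symmetry. apply key.
  - intros H g s Hs.
    destruct (H g (gop g s)) as [t [Ht E]].
    + exists s. split; [exact Hs | reflexivity].
    + assert (E2 : gop (gop g s) (gyr g s (ginv s)) = gop (gop g s) t) by (rewrite key; exact E). clear E. rename E2 into E.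
      apply lcancel in E. rewrite (gyr_inv G) in E.
      rewrite <- (inv_inv G (gyr g s s)), E. apply Hsym. exact Ht.
Qed.
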